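(* Let $\mathcal{G}$ be a hypergraph with at least one edge. Then $|\lambda_{\min}(A_{\mathcal{G}})|\ge 1/(r(\mathcal{G})-1)$, where $\lambda_{\min}(A_{\mathcal{G}})$ is the smallest eigenvalue of $A_{\mathcal{G}}$.
   Context: A hypergraph $\mathcal{G}=(V,E)$ has a finite vertex set $V$ and a set $E$ of subsets of $V$ (edges), each of cardinality at least $2$. The rank $r(\mathcal{G})$ is the maximum cardinality of an edge. The adjacency matrix $A_{\mathcal{G}}$ has $(A_{\mathcal{G}})_{ij}=\sum_{e\in E,\, i,j\in e}\frac{1}{|e|-1}$ for $i\ne j$ and zero diagonal. *)

(* Defs.v *)
From HB Require Import structures.
From mathcomp Require Import all_boot all_order all_algebra.
From mathcomp Require Import reals.
Set Implicit Arguments. Unset Strict Implicit. Unset Printing Implicit Defensive.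
Import Order.TTheory GRing.Theory Num.Theory.
Local Open Scope ring_scope.

Definition is_hypergraph (n : nat) (E : {set {set 'I_n}}) : Prop :=
  forall e, e \in E -> (2 <= #|e|)%N.

Definition hrank (n : nat) (E : {set {set 'I_n}}) : nat :=
  \max_(e in E) #|e|.

Definition hadj (R : fieldType) (n : nat) (E : {set {set 'I_n}}) : 'M[R]_n :=
  \matrix_(i < n, j < n)
    if i == j then 0
    else \sum_(e in E | (i \in e) && (j \in e)) ((#|e|.-1)%:R)^-1.

(* Main.v *)
Set Warnings "-notation-overridden -ambiguous-paths".
Require Import Defs.
From HB Require Import structures.
From mathcomp Require Import all_boot all_order all_algebra.
From mathcomp Require Import reals complex.
From mathcomp Require Import lra zify.
Import Order.TTheory GRing.Theory Num.Theory.
Local Open Scope ring_scope.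

Lemma quad_delta (K : comPzRingType) n (A : 'M[K]_n) i j :
  let x := (delta_mx 0 i - delta_mx 0 j : 'rV[K]_n) in
  (x *m A *m x^T) 0 0 = A i i + A j j - A i j - A j i
  :> K.
Proof.
move=> x; have E a b : ((delta_mx 0 a : 'rV[K]_n) *m A *m (delta_mx 0 b : 'rV[K]_n)^T) 0 0 = A a b.
  by rewrite trmx_delta -rowE -colE !mxE.
rewrite /x (linearB (@trmx K 1 n)) /= mulmxBl mulmxBr !mulmxBl.
have F (P Q : 'M[K]_1) : (P - Q) 0 0 = P 0 0 - Q 0 0 by rewrite !mxE.
rewrite !F !E.
by rewrite opprB !addrA -!addrA; congr (_ + _); rewrite addrC -!addrA; congr (_ + _);
  rewrite addrC.
Qed.

Section Herm.
Variable C : numClosedFieldType.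
Local Open Scope sesquilinear_scope.

Lemma tC_mul m n p (A : 'M[C]_(m, n)) (B : 'M[C]_(n, p)) :
  (A *m B) ^t* = B ^t* *m A ^t*.
Proof. by rewrite -map_trmx trmx_mul map_mxM !map_trmx. Qed.

Lemma quad_sum n (y : 'rV[C]_n) (d : 'rV[C]_n) :
  (y *m diag_mx d *m y ^t*) 0 0 = \sum_k d 0 k * (y 0 k * (y 0 k)^*).
Proof.
rewrite mul_mx_diag !mxE; apply: eq_bigr => k _; rewrite !mxE.
by rewrite mulrCA mulrA.
Qed.

Lemma herm_rayleigh n (M : 'M[C]_n) (x : 'rV[C]_n) (c : C) :
  M \is hermsymmx -> c \is Num.real -> x != 0 ->
  (x *m M *m x ^t*) 0 0 + c * (x *m x ^t*) 0 0 <= 0 ->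
  exists k, [/\ eigenvalue M (spectral_diag M 0 k),
                spectral_diag M 0 k \is Num.real &
                spectral_diag M 0 k <= - c].
Proof.
move=> Mh creal xn0 hq.
set P := spectralmx M; set D := spectral_diag M.
have Pu : P \is unitarymx := spectral_unitarymx M.
have Punit : P \in unitmx := spectral_unit M.
have PP : P ^t* *m P = 1%:M by apply: mulmx1C; apply/unitarymxP.
have Mdef : M = P ^t* *m diag_mx D *m P.
  by rewrite -invmx_unitary //; apply/orthomx_spectralP/hermitian_normalmx.
have Dreal : D \is a realmx := hermitian_spectral_diag_real Mh.
have Dr k : D 0 k \is Num.real by move/mxOverP: Dreal; apply.
set y := x *m P ^t*.
have yt : y ^t* = P *m x ^t* by rewrite /y tC_mul trmxCK.
have q1 : x *m M *m x ^t* = y *m diag_mx D *m y ^t*.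
  by rewrite yt Mdef /y !mulmxA.
have q2 : x *m x ^t* = y *m 1%:M *m y ^t*.
  by rewrite mulmx1 yt /y -mulmxA (mulmxA _ P) PP mul1mx.
have yn0 : y != 0.
  apply: contraNneq xn0 => y0.
  by rewrite -[x]mulmx1 -PP mulmxA -/y y0 mul0mx.
have [k0 yk0] : exists k, y 0 k != 0.
  apply/existsP; apply: contraNT yn0; rewrite negb_exists => /forallP H.
  by apply/eqP/rowP => k; move: (H k); rewrite negbK => /eqP ->; rewrite mxE.
have /= [k Dk] : exists k, D 0 k <= - c.
  apply/existsP; apply: contraTT hq; rewrite negb_exists => /forallP H.
  have pos k : 0 < D 0 k + c.
    by rewrite -[c]opprK subr_gt0 real_ltNge ?rpredN ?H.
  have tm k : D 0 k * (y 0 k * (y 0 k)^*) + c * (const_mx 1 0 k * (y 0 k * (y 0 k)^*))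
      = (D 0 k + c) * (y 0 k * (y 0 k)^*).
    by rewrite [const_mx 1 0 k]mxE mul1r mulrDl.
  suff S0 : 0 < (x *m M *m x ^t*) 0 0 + c * (x *m x ^t*) 0 0 by rewrite (lt_geF S0).
  rewrite q1 q2 -diag_const_mx !quad_sum mulr_sumr -big_split /=.
  rewrite (bigD1 k0) //= tm; apply: ltr_wpDr.
    apply: sumr_ge0 => k _; rewrite tm.
    by apply: mulr_ge0; [exact: ltW | exact: mul_conjC_ge0].
  by apply: mulr_gt0 => //; rewrite mul_conjC_gt0.
exists k; split => //.
apply/eigenvalueP; exists ('e_k *m P).
  have PP' : P *m P ^t* = 1%:M by apply/unitarymxP.
  rewrite Mdef !mulmxA -(mulmxA _ P) PP' mulmx1 scalemxAl; congr (_ *m _).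
  apply/rowP => l; rewrite mul_mx_diag !mxE eqxx /=; case: eqP => [->|_]; by rewrite ?mulr1 ?mul1r ?mulr0 ?mul0r.
by rewrite mulmx_free_eq0 ?row_free_unit //; apply/eqP => /rowP /(_ k);
  rewrite !mxE !eqxx /= => /eqP; rewrite oner_eq0.
Qed.
End Herm.

Local Open Scope complex_scope.

Lemma conjCR (R : rcfType) (x : R) : Num.conj (x%:C) = x%:C.
Proof. exact: conjc_real. Qed.

Theorem corollary2 (R : realType) (n : nat) (E : {set {set 'I_n}})
  (hE : is_hypergraph E) (hne : E != set0) (lmin : R) :
  eigenvalue (hadj R E) lmin ->
  (forall mu : R, eigenvalue (hadj R E) mu -> lmin <= mu) ->
  ((hrank E).-1%:R)^-1 <= `|lmin|.
Proof.
move=> eig minl.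
have [e0 e0E] := set0Pn _ hne.
have [i [j [ie je ij]]] := card_gt1P (hE _ e0E).
set A := hadj R E.
set c := ((hrank E).-1%:R)^-1 : R.
have Aii a : A a a = 0 by rewrite /A /hadj mxE eqxx.
have Asym a b : A a b = A b a.
  rewrite /A /hadj !mxE eq_sym; case: eqP => // _.
  by apply: eq_bigl => e; rewrite [(a \in e) && _]andbC.
have e0r : (#|e0| <= hrank E)%N by rewrite /hrank (bigD1 e0) //= leq_maxl.
have e02 : (2 <= #|e0|)%N := hE _ e0E.
have cpos : 0 < c by rewrite /c invr_gt0 ltr0n; lia.
have cA : c <= A i j.
  rewrite /A /hadj mxE (negbTE ij) (bigD1 e0) /=; last by rewrite e0E ie je.
  apply: ler_wpDr; first by apply: sumr_ge0 => e _; rewrite invr_ge0 ler0n.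
  rewrite /c lef_pV2 ?posrE ?ltr0n ?ler_nat.
  - by rewrite -!subn1 leq_sub2r.
  - by move: e0r e02; case: (hrank E) => [|[|m]] //; case: #|e0| => [|[|]].
  - by move: e02; case: #|e0| => [|[|]].
have minl' : forall mu, eigenvalue A mu -> lmin <= mu := minl.
clearbody A.
pose toC := real_complex R.
pose M := map_mx toC A.
pose xR := (delta_mx 0 i - delta_mx 0 j : 'rV[R]_n).
pose x := map_mx toC xR.
have Mh : M \is hermsymmx.
  apply/is_hermitianmxP; rewrite expr0 scale1r; apply/matrixP => a b.
  by rewrite !mxE conjCR Asym.
have creal : c%:C \is Num.real by apply/complex_realP; exists c.
have xRn0 : xR != 0.
  apply/eqP => /rowP/(_ i); rewrite !mxE !eqxx (negbTE ij) /= subr0 => /eqP.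
  by rewrite oner_eq0.
have xn0 : x != 0 by rewrite map_mx_eq0.
have xt : (x ^t Num.conj)%sesqui = map_mx toC xR^T.
  by apply/matrixP => a b; rewrite !mxE conjCR.
have q1 : (x *m M *m (x ^t Num.conj)%sesqui) 0 0 = toC ((xR *m A *m xR^T) 0 0).
  by rewrite xt -!map_mxM mxE.
have q2 : (x *m (x ^t Num.conj)%sesqui) 0 0 = toC ((xR *m 1%:M *m xR^T) 0 0).
  by rewrite mulmx1 xt -!map_mxM mxE.
have hq : (x *m M *m (x ^t Num.conj)%sesqui) 0 0 + c%:C * (x *m (x ^t Num.conj)%sesqui) 0 0 <= 0.
  rewrite q1 q2 /toC -rmorphM -rmorphD /= -[0 : R[i]]/((0:R)%:C) lecR.
  rewrite !quad_delta !Aii (Asym j i) !mxE eqxx (negbTE ij) eq_sym (negbTE ij) /=.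
  rewrite eqxx /= !subr0 !add0r. clear -cA. lra.
have [k [eigk realk lek]] := @herm_rayleigh _ _ _ _ _ Mh creal xn0 hq.
set d := spectral_diag M 0 k in eigk realk lek.
have dr := RRe_real realk.
set r := complex.Re d in dr.
have rc : r <= - c by rewrite -lecR rmorphN dr.
have eigr : eigenvalue A r.
  move: eigk; rewrite -dr !eigenvalue_root_char -map_char_poly.
  by rewrite (fmorph_root toC).
have := minl' r eigr; rewrite -/A -/c => hl.
rewrite ler0_norm; lra.
Qed.
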